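(* Let $(C_n)_{n\in\mathbb{N}}$ be a sequence of regular symmetric bodies in $\mathbb{R}^d$ converging in the Hausdorff metric to a regular symmetric body $C$. Then $\sup_{x\in\mathbb{B}^d}\|\varphi_{C_n}(x)-\varphi_C(x)\|\to0$ as $n\to\infty$.
   Context: A regular symmetric body is a compact convex $C\subset\mathbb{R}^d$ with non-empty interior, $C=-C$, that is smooth (unique supporting hyperplane at each boundary point) and strictly convex (each supporting hyperplane meets $C$ in one point). It defines the norm $\|x\|_C=\inf\{\lambda>0:x\in\lambda C\}$, and $\varphi_C(x)$ is the derivative of $\tfrac12\|\cdot\|_C^2$ at $x\ne0$, with $\varphi_C(0)=0$. $\|\cdot\|$ is the Euclidean norm and $\mathbb{B}^d$ its closed unit ball. *)

(* Defs.v *)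
(* R^d is 'rV[R]_d for R : realType. *)
From HB Require Import structures.
From mathcomp Require Import all_boot all_order all_algebra.
From mathcomp Require Import all_classical all_reals all_analysis.
Set Implicit Arguments. Unset Strict Implicit. Unset Printing Implicit Defensive.
Import Order.TTheory GRing.Theory Num.Theory.
Import numFieldNormedType.Exports.
Local Open Scope classical_set_scope.
Local Open Scope ring_scope.

Section Defs.
Variables (R : realType) (d : nat).
Local Notation V := 'rV[R]_d.

Definition edot (u v : V) : R := \sum_(i < d) u 0 i * v 0 i.
Definition enorm (x : V) : R := Num.sqrt (edot x x).

Definition unit_ball : set V := [set x | enorm x <= 1].

Definition enbhd (A : set V) (e : R) : set V :=
  [set x | exists2 a, A a & enorm (x - a) <= e].

Definition hausdorff_dist (A B : set V) : R :=
  inf [set e : R | 0 <= e /\ A `<=` enbhd B e /\ B `<=` enbhd A e].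

Definition convex_set (C : set V) : Prop :=
  forall x y, C x -> C y -> forall t : R, 0 <= t <= 1 ->
    C ((1 - t) *: x + t *: y).

Definition boundary (C : set V) : set V := closure C `\` interior C.

Definition supporting_normal (C : set V) (x : V) (u : V) : Prop :=
  u != 0 /\ forall y, C y -> edot u y <= edot u x.

(* smooth: unique supporting hyperplane at each boundary point *)
Definition smooth_body (C : set V) : Prop :=
  forall x, boundary C x -> forall u v,
    supporting_normal C x u -> supporting_normal C x v ->
    exists2 l : R, 0 < l & v = l *: u.

(* strictly convex: each supporting hyperplane meets C in exactly one point *)
Definition strictly_convex_body (C : set V) : Prop :=
  forall x, boundary C x -> forall u, supporting_normal C x u ->
    forall y, C y -> edot u y = edot u x -> y = x.

Definition regular_symmetric_body (C : set V) : Prop :=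
  [/\ compact C, convex_set C, interior C !=set0,
      (forall x, C x <-> C (- x)) &
      smooth_body C /\ strictly_convex_body C].

Definition gauge (C : set V) (x : V) : R :=
  inf [set l : R | 0 < l /\ exists2 c, C c & x = l *: c].

(* phi_C(x) = gradient of 1/2 ||.||_C^2 at x <> 0, phi_C(0) = 0;
   the gradient is the vector of partial derivatives. *)
Definition phi (C : set V) (x : V) : V :=
  if x == 0 then 0
  else \row_(i < d) ('D_(delta_mx 0 i : V)
                        (fun y : V => (gauge C y) ^+ 2 / 2) x).

End Defs.

(* Main.v *)
Require Import Defs.
From HB Require Import structures.
From mathcomp Require Import all_boot all_order all_algebra.
From mathcomp Require Import all_classical all_reals all_analysis.
From mathcomp Require Import ring lra.
Set Implicit Arguments. Unset Strict Implicit. Unset Printing Implicit Defensive.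
Import Order.TTheory GRing.Theory Num.Theory.
Import numFieldNormedType.Exports.
Local Open Scope classical_set_scope.
Local Open Scope ring_scope.

Section NormHelpers.
Variables (R : realType) (d : nat).
Local Notation V := 'rV[R]_d.
Implicit Types (u v x y : V).

Lemma norm_entry v i : `|v 0 i| <= `|v|.
Proof.
rewrite [leRHS]/Num.norm /= mx_normrE; apply/bigmax_geP; right => /=.
by exists (0, i).
Qed.

Lemma norm_le_entries v c : 0 <= c -> (forall i, `|v 0 i| <= c) -> `|v| <= c.
Proof.
move=> c0 H; rewrite [leLHS]/Num.norm /= mx_normrE; apply/bigmax_leP; split=> //.
by move=> [a b] _ /=; rewrite (ord1 a); exact: H.
Qed.

Lemma edotZr u a x : edot u (a *: x) = a * edot u x.
Proof. by rewrite /edot mulr_sumr; apply: eq_bigr => i _; rewrite mxE mulrCA. Qed.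

Lemma edotDr u x y : edot u (x + y) = edot u x + edot u y.
Proof. by rewrite /edot -big_split; apply: eq_bigr => i _; rewrite mxE mulrDr. Qed.

Lemma edotNr u x : edot u (- x) = - edot u x.
Proof. by rewrite /edot -sumrN; apply: eq_bigr => i _; rewrite mxE mulrN. Qed.

Lemma edotZl u a x : edot (a *: u) x = a * edot u x.
Proof. by rewrite /edot mulr_sumr; apply: eq_bigr => i _; rewrite mxE mulrA. Qed.

Lemma edot0l x : edot 0 x = 0.
Proof. by rewrite /edot big1 // => i _; rewrite mxE mul0r. Qed.

Lemma edot_ge0 x : 0 <= edot x x.
Proof. by apply: sumr_ge0 => i _; rewrite -expr2 sqr_ge0. Qed.

Lemma norm_le_enorm v : `|v| <= enorm v.
Proof.
apply: norm_le_entries; first exact: sqrtr_ge0.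
move=> i; rewrite -sqrtr_sqr ler_wsqrtr //.
rewrite /edot (bigD1 i) //= -expr2 lerDl; apply: sumr_ge0 => j _.
by rewrite -expr2 sqr_ge0.
Qed.

Lemma enorm_le v : enorm v <= d%:R * `|v|.
Proof.
have h : edot v v <= (d%:R * `|v|) ^+ 2.
  apply: (@le_trans _ _ (\sum_(i < d) `|v|^+2)).
    apply: ler_sum => i _; rewrite -expr2 -real_normK ?num_real //.
    by rewrite lerXn2r ?nnegrE ?normr_ge0 ?norm_entry.
  rewrite sumr_const card_ord exprMn -[_ *+ d]mulr_natl.
  have hd : (d%:R : R) <= d%:R ^+ 2.
    rewrite -natrX ler_nat; case: (d) => // n.
    by rewrite expnS leq_pmulr // expn_gt0.
  by apply: ler_wpM2r => //; exact: sqr_ge0.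
rewrite /enorm; apply: le_trans (ler_wsqrtr h) _.
by rewrite sqrtr_sqr ger0_norm // mulr_ge0.
Qed.

End NormHelpers.

Section HahnBanach.
Variables (R : realType) (d : nat).
Local Notation V := 'rV[R]_d.
Implicit Types (u v w x y z : V) (p q : V -> R).

Definition sublin p :=
  (forall a z, 0 < a -> p (a *: z) = a * p z) /\
  (forall y z, p (y + z) <= p y + p z).

Lemma sublin0 p : sublin p -> p 0 = 0.
Proof.
move=> [h _]; have := h 2 0 (ltr0Sn _ 1); rewrite scaler0 => /eqP.
by rewrite -subr_eq0 -{1}(mul1r (p 0)) -mulrBl mulf_eq0 => /orP[|/eqP//];
  rewrite (_ : 1 - 2 = -1 :> R) ?oppr_eq0 ?oner_eq0 //; lra.
Qed.

Lemma sublinZ p a z : sublin p -> 0 <= a -> p (a *: z) = a * p z.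
Proof.
move=> sp; rewrite le_eqVlt => /orP[/eqP<-|]; last by case: sp => h _; exact: h.
by rewrite scale0r mul0r sublin0.
Qed.

Lemma sublinN p z : sublin p -> 0 <= p z + p (- z).
Proof. by move=> sp; rewrite -(sublin0 sp) -(subrr z); case: sp => _; apply. Qed.

Definition pw p v z : R :=
  inf [set y | exists2 t : R, 0 <= t & y = p (z + t *: v) - t * p v].

Section pw.
Variables (p : V -> R) (v : V).
Hypothesis sp : sublin p.

Let E z := [set y | exists2 t : R, 0 <= t & y = p (z + t *: v) - t * p v].

Lemma pw_lb z e : E z e -> - p (- z) <= e.
Proof.
case=> t t0 ->; have := sp.2 (z + t *: v) (- z).
rewrite [z + _ + _]addrC addKr (sublinZ _ sp t0); lra.
Qed.

Lemma pw_ne z : E z !=set0.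
Proof. by exists (p z); exists 0 => //; rewrite scale0r addr0 mul0r subr0. Qed.

Lemma pw_hlb z : has_lbound (E z).
Proof. by exists (- p (- z)) => e /pw_lb. Qed.

Lemma pw_le z e : E z e -> pw p v z <= e.
Proof. by move=> He; exact: ge_inf (pw_hlb z) _ He. Qed.

Lemma pw_ge z c : (forall e, E z e -> c <= e) -> c <= pw p v z.
Proof. by move=> H; apply: lb_le_inf (pw_ne z) _ => e /H. Qed.

Lemma pw_lep z : pw p v z <= p z.
Proof. by apply: pw_le; exists 0 => //; rewrite scale0r addr0 mul0r subr0. Qed.

Lemma pw_geN z : - p (- z) <= pw p v z.
Proof. exact: pw_ge (@pw_lb z). Qed.

Lemma pw_Zle a z : 0 < a -> pw p v (a *: z) <= a * pw p v z.
Proof.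
move=> a0; rewrite -ler_pdivrMl //; apply: pw_ge => e [t t0 ->].
rewrite ler_pdivrMl //; apply: pw_le; exists (a * t); first by rewrite mulr_ge0 // ltW.
rewrite mulrBr -(sublinZ _ sp (ltW a0)) scalerDr scalerA mulrA //.
Qed.

Lemma pw_Z a z : 0 < a -> pw p v (a *: z) = a * pw p v z.
Proof.
move=> a0; apply/eqP; rewrite eq_le pw_Zle //=.
have ai : 0 < a^-1 by rewrite invr_gt0.
have := @pw_Zle a^-1 (a *: z) ai; rewrite scalerA mulVf ?gt_eqF // scale1r.
by move=> h; rewrite -ler_pdivlMl // mulrC.
Qed.

Lemma pw_D y z : pw p v (y + z) <= pw p v y + pw p v z.
Proof.
rewrite -lerBlDr; apply: pw_ge => e1 [t1 t10 ->]; rewrite lerBlDr -lerBlDl.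
apply: pw_ge => e2 [t2 t20 ->]; rewrite lerBlDl.
apply: (@le_trans _ _ (p (y + z + (t1 + t2) *: v) - (t1 + t2) * p v)).
  by apply: pw_le; exists (t1 + t2) => //; rewrite addr_ge0.
rewrite (_ : y + z + (t1 + t2) *: v = (y + t1 *: v) + (z + t2 *: v)); last first.
  by rewrite scalerDl addrACA.
have := sp.2 (y + t1 *: v) (z + t2 *: v); lra.
Qed.

Lemma pw_sublin : sublin (pw p v).
Proof. by split; [exact: pw_Z | exact: pw_D]. Qed.

Lemma pw_vN : pw p v (- v) = - p v.
Proof.
apply/eqP; rewrite eq_le; apply/andP; split; last by have := pw_geN (- v); rewrite opprK.
apply: pw_le; exists 1 => //; rewrite scale1r addNr mul1r sublin0 // sub0r //.
Qed.

Lemma pw_v : pw p v v = p v.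
Proof.
apply/eqP; rewrite eq_le pw_lep /=.
have := sublinN v pw_sublin; rewrite pw_vN; lra.
Qed.

End pw.

Definition antisym p v := p (- v) = - p v.

Lemma antisym_le p q v : sublin q -> (forall z, q z <= p z) -> antisym p v ->
  antisym q v /\ q v = p v.
Proof.
move=> sq qp ap.
have h1 := qp v; have h2 := qp (- v); have h3 := sublinN v sq.
rewrite /antisym in ap *; rewrite ap in h2; split; lra.
Qed.

Lemma antisymZ p v a : sublin p -> antisym p v -> p (a *: v) = a * p v.
Proof.
move=> sp ap; have [a0|a0] := leP 0 a; first exact: sublinZ.
rewrite -[a]opprK scaleNr -scalerN sublinZ ?ap; last by rewrite oppr_ge0 ltW.
  by rewrite mulrNN opprK.
exact: sp.
Qed.

Lemma sublin_sum p (I : Type) (s : seq I) (f : I -> V) : sublin p ->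
  p (\sum_(i <- s) f i) <= \sum_(i <- s) p (f i).
Proof.
move=> sp; elim: s => [|a s IH]; first by rewrite !big_nil sublin0.
rewrite !big_cons; apply: le_trans (sp.2 _ _) _; exact: lerD.
Qed.

Lemma linear_of_antisym p : sublin p -> (forall i, antisym p (delta_mx 0 i)) ->
  forall z, p z = edot (\row_i p (delta_mx 0 i)) z.
Proof.
move=> sp ap z.
have ez : forall z, p z <= edot (\row_i p (delta_mx 0 i)) z.
  move=> {}z; rewrite {1}(row_sum_delta z); apply: le_trans (sublin_sum _ _ sp) _.
  rewrite /edot le_eqVlt; apply/orP; left; apply/eqP; apply: eq_bigr => i _.
  by rewrite antisymZ // mxE mulrC.
have := ez (- z); rewrite edotNr => h1.
have := sublinN z sp; have := ez z; lra.
Qed.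

Lemma HB_step p w (k : nat) : sublin p -> (k <= d)%N ->
  exists q, [/\ sublin q, forall z, q z <= p z, q w = p w, antisym q w &
     forall i : 'I_d, (i < k)%N -> antisym q (delta_mx 0 i)].
Proof.
move=> sp; elim: k => [_|k IH kd].
  exists (pw p w); split => //; [exact: pw_sublin | exact: pw_lep | exact: pw_v |].
  by rewrite /antisym pw_vN // pw_v.
have [q [sq qp qw aw qa]] := IH (ltnW kd).
pose e := delta_mx 0 (Ordinal kd) : V.
have sr := pw_sublin e sq; have rq := pw_lep e sq.
exists (pw q e); split => //.
- by move=> z; apply: le_trans (rq z) (qp z).
- by rewrite -qw; case: (antisym_le sr rq aw).
- by case: (antisym_le sr rq aw).
- move=> i; rewrite ltnS leq_eqVlt => /orP[/eqP ik|ik].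
    have -> : i = Ordinal kd by apply: val_inj.
    by rewrite /antisym pw_vN // pw_v.
  by case: (antisym_le sr rq (qa i ik)).
Qed.

Lemma hahn_banach p w : sublin p ->
  exists u : V, (forall z, edot u z <= p z) /\ edot u w = p w.
Proof.
move=> sp; have [q [sq qp qw _ qa]] := HB_step w sp (leqnn d).
exists (\row_i q (delta_mx 0 i)); split.
  by move=> z; rewrite -linear_of_antisym // => i; exact: qa.
by rewrite -linear_of_antisym // => i; exact: qa.
Qed.

End HahnBanach.


Lemma le_of_gt (R : realType) (a b : R) : (forall l, a < l -> b <= l) -> b <= a.
Proof.
move=> H; rewrite leNgt; apply/negP => ab.
have := H ((a + b) / 2); have -> : a < (a + b) / 2 by lra.
move=> /(_ isT); lra.
Qed.

Section Gauge.
Variables (R : realType) (d : nat).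
Local Notation V := 'rV[R]_d.
Implicit Types (u v w x y z : V).
Variables (C : set V) (r M : R).
Hypotheses (hr : 0 < r) (hball : forall z, `|z| < r -> C z)
  (hM : 0 < M) (hbd : forall c, C c -> `|c| <= M) (hconv : Defs.convex_set C).

Local Notation g := (gauge C).
Let G x := [set l : R | 0 < l /\ exists2 c, C c & x = l *: c].

Lemma C0 : C 0.
Proof. by apply: hball; rewrite normr0. Qed.

Lemma G_gt l x : l > `|x| / r -> G x l.
Proof.
move=> lx; have l0 : 0 < l by apply: le_lt_trans lx; rewrite divr_ge0 // ltW.
split=> //; exists (l^-1 *: x); last by rewrite scalerA mulfV ?gt_eqF // scale1r.
apply: hball; rewrite normrZ ger0_norm ?invr_ge0 ?ltW // mulrC.
by rewrite ltr_pdivrMr // mulrC -ltr_pdivrMr.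
Qed.

Lemma G_ne x : G x !=set0.
Proof. exists (`|x| / r + 1); apply: G_gt; lra. Qed.

Lemma G_hlb x : has_lbound (G x).
Proof. by exists 0 => l [l0 _]; exact: ltW. Qed.

Lemma g_le x l : G x l -> g x <= l.
Proof. by move=> Gl; exact: ge_inf (G_hlb x) _ Gl. Qed.

Lemma g_ge x c : (forall l, G x l -> c <= l) -> c <= g x.
Proof. by move=> H; apply: lb_le_inf (G_ne x) _ => l /H. Qed.

Lemma g_ge0 x : 0 <= g x.
Proof. by apply: g_ge => l [l0 _]; exact: ltW. Qed.

Lemma g_le_norm x : g x <= `|x| / r.
Proof. by apply: le_of_gt => l lx; apply: g_le; exact: G_gt. Qed.

Lemma g_mem c : C c -> g c <= 1.
Proof. by move=> Cc; apply: g_le; split=> //; exists c; rewrite ?scale1r. Qed.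

Lemma g_lt1 x : g x < 1 -> C x.
Proof.
move=> /(inf_lt (G_ne x))[l [l0 [c Cc ->]] l1].
have := hconv C0 Cc (_ : 0 <= l <= 1); rewrite scaler0 add0r; apply.
by rewrite !ltW.
Qed.

Lemma g_Zle a x : 0 < a -> g (a *: x) <= a * g x.
Proof.
move=> a0; rewrite mulrC -ler_pdivrMr //; apply: g_ge => l [l0 [c Cc ->]].
rewrite ler_pdivrMr //; apply: g_le; split; first by rewrite mulr_gt0.
by exists c => //; rewrite scalerA mulrC.
Qed.

Lemma g_Z a x : 0 < a -> g (a *: x) = a * g x.
Proof.
move=> a0; apply/eqP; rewrite eq_le g_Zle //=.
have ai : 0 < a^-1 by rewrite invr_gt0.
have := g_Zle (a *: x) ai; rewrite scalerA mulVf ?gt_eqF // scale1r.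
by move=> h; rewrite -ler_pdivlMl // mulrC.
Qed.

Lemma g_D x y : g (x + y) <= g x + g y.
Proof.
rewrite -lerBlDr; apply: g_ge => l1 [l10 [c1 C1 ->]]; rewrite lerBlDr -lerBlDl.
apply: g_ge => l2 [l20 [c2 C2 ->]]; rewrite lerBlDl.
have l0 : 0 < l1 + l2 by rewrite addr_gt0.
apply: g_le; split => //.
exists ((1 - l2 / (l1 + l2)) *: c1 + (l2 / (l1 + l2)) *: c2).
  apply: hconv => //; apply/andP; split.
    by rewrite divr_ge0 // ltW.
  by rewrite ler_pdivrMr // mul1r lerDr ltW.
rewrite scalerDr !scalerA; congr (_ *: _ + _ *: _).
  by field; rewrite gt_eqF.
by field; rewrite gt_eqF.
Qed.

Lemma g_ge_norm x : `|x| / M <= g x.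
Proof.
apply: g_ge => l [l0 [c Cc ->]]; rewrite normrZ ger0_norm; last exact: ltW.
by rewrite ler_pdivrMr // ler_wpM2l ?hbd // ltW.
Qed.

Lemma g_gt0 x : x != 0 -> 0 < g x.
Proof.
move=> x0; apply: lt_le_trans (g_ge_norm x); rewrite divr_gt0 //.
by rewrite normr_gt0.
Qed.

Lemma g_lip x y : `|g x - g y| <= `|x - y| / r.
Proof.
have h1 := g_D y (x - y); rewrite addrCA subrr addr0 in h1.
have h2 := g_D x (y - x); rewrite addrCA subrr addr0 in h2.
have h3 := g_le_norm (x - y); have h4 := g_le_norm (y - x).
rewrite distrC in h4.
rewrite ler_norml; apply/andP; split; lra.
Qed.

Lemma g_0 : g 0 = 0.
Proof. by apply/eqP; rewrite eq_le g_ge0 andbT; have := g_le_norm 0; rewrite normr0 mul0r. Qed.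

End Gauge.


Section DirDeriv.
Variables (R : realType) (d : nat).
Local Notation V := 'rV[R]_d.
Implicit Types (u v w x y z : V).

Definition qd (g : V -> R) x w (t : R) := (g (x + t *: w) - g x) / t.
Definition Dp (g : V -> R) x w := inf [set y | exists2 t : R, 0 < t & y = qd g x w t].

Variable g : V -> R.
Hypotheses (gZ : forall a x, 0 < a -> g (a *: x) = a * g x)
  (gD : forall x y, g (x + y) <= g x + g y).

Lemma qd_mono x w s t : 0 < s -> s <= t -> qd g x w s <= qd g x w t.
Proof.
move=> s0; rewrite le_eqVlt => /orP[/eqP->//|st].
have t0 : 0 < t by apply: lt_trans st.
set k := s / t.
have k0 : 0 < k by rewrite divr_gt0.
have k1 : 0 < 1 - k by rewrite subr_gt0 ltr_pdivrMr // mul1r.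
have e : x + s *: w = (1 - k) *: x + k *: (x + t *: w).
  rewrite scalerDr scalerA /k mulfVK ?gt_eqF // scalerBl scale1r.
  by rewrite addrA subrK.
have h : g (x + s *: w) <= (1 - k) * g x + k * g (x + t *: w).
  by rewrite e; apply: le_trans (gD _ _) _; rewrite (gZ _ k1) (gZ _ k0).
rewrite /qd.
have -> : (g (x + t *: w) - g x) / t = (k * (g (x + t *: w) - g x)) / s.
  by rewrite /k; field; rewrite !gt_eqF.
apply: ler_wpM2r; first by rewrite invr_ge0 ltW.
lra.
Qed.

Lemma qd_lb x w t : 0 < t -> - g (- w) <= qd g x w t.
Proof.
move=> t0; rewrite /qd ler_pdivlMr //.
have := gD (x + t *: w) (t *: (- w)); rewrite (gZ _ t0) scalerN addrK.
lra.
Qed.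

Let E x w := [set y | exists2 t : R, 0 < t & y = qd g x w t].

Lemma E_ne x w : E x w !=set0.
Proof. by exists (qd g x w 1); exists 1. Qed.

Lemma E_hlb x w : has_lbound (E x w).
Proof. by exists (- g (- w)) => y [t t0 ->]; exact: qd_lb. Qed.

Lemma Dp_le x w t : 0 < t -> Dp g x w <= qd g x w t.
Proof. by move=> t0; apply: ge_inf (E_hlb x w) _ _; exists t. Qed.

Lemma Dp_ge x w c : (forall t, 0 < t -> c <= qd g x w t) -> c <= Dp g x w.
Proof. by move=> H; apply: lb_le_inf (E_ne x w) _ => y [t t0 ->]; exact: H. Qed.

Lemma Dp_lb x w : - g (- w) <= Dp g x w.
Proof. by apply: Dp_ge => t t0; exact: qd_lb. Qed.

Lemma Dp_approx x w e : 0 < e -> exists2 t, 0 < t & qd g x w t < Dp g x w + e.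
Proof.
move=> e0; have : Dp g x w < Dp g x w + e by rewrite ltrDl.
by move=> /(inf_lt (E_ne x w))[y [t t0 ->] h]; exists t.
Qed.

Lemma Dp_le_g x w : Dp g x w <= g w.
Proof.
apply: le_trans (Dp_le x w ltr01) _; rewrite /qd scale1r divr1 lerBlDl.
exact: gD.
Qed.

Lemma Dp_Zle x w a : 0 < a -> Dp g x (a *: w) <= a * Dp g x w.
Proof.
move=> a0; rewrite mulrC -ler_pdivrMr //; apply: Dp_ge => t t0.
rewrite ler_pdivrMr //.
have ta : 0 < t / a by rewrite divr_gt0.
apply: le_trans (Dp_le _ _ ta) _.
rewrite /qd scalerA mulfVK ?gt_eqF //.
rewrite le_eqVlt; apply/orP; left; apply/eqP; field; rewrite !gt_eqF //.
Qed.

Lemma Dp_Z x w a : 0 < a -> Dp g x (a *: w) = a * Dp g x w.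
Proof.
move=> a0; apply/eqP; rewrite eq_le Dp_Zle //=.
have ai : 0 < a^-1 by rewrite invr_gt0.
have := Dp_Zle x (a *: w) ai; rewrite scalerA mulVf ?gt_eqF // scale1r.
by move=> h; rewrite -ler_pdivlMl // mulrC.
Qed.

Lemma qd_D x w1 w2 t : 0 < t ->
  qd g x (w1 + w2) t <= qd g x w1 (2 * t) + qd g x w2 (2 * t).
Proof.
move=> t0; rewrite /qd.
have h2 : 0 < 2^-1 :> R by rewrite invr_gt0.
have e : x + t *: (w1 + w2) =
   2^-1 *: (x + (2 * t) *: w1) + 2^-1 *: (x + (2 * t) *: w2).
  by apply/rowP => i; rewrite !mxE; field.
have h : g (x + t *: (w1 + w2)) <=
    2^-1 * g (x + (2 * t) *: w1) + 2^-1 * g (x + (2 * t) *: w2).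
  by rewrite e -!gZ // gD.
have -> : (g (x + (2 * t) *: w1) - g x) / (2 * t) +
          (g (x + (2 * t) *: w2) - g x) / (2 * t) =
  (2^-1 * g (x + (2 * t) *: w1) + 2^-1 * g (x + (2 * t) *: w2) - g x) / t.
  by field; rewrite gt_eqF.
apply: ler_wpM2r; first by rewrite invr_ge0 ltW.
lra.
Qed.

Lemma Dp_D x w1 w2 : Dp g x (w1 + w2) <= Dp g x w1 + Dp g x w2.
Proof.
rewrite -lerBlDr; apply: Dp_ge => t1 t10; rewrite lerBlDr -lerBlDl.
apply: Dp_ge => t2 t20; rewrite lerBlDl.
set m := Num.min t1 t2.
have m0 : 0 < m by rewrite lt_min t10 t20.
have m2 : 0 < m / 2 by rewrite divr_gt0.
apply: le_trans (Dp_le _ _ m2) _; apply: le_trans (qd_D _ _ _ m2) _.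
rewrite mulrC divfK ?pnatr_eq0 //.
apply: lerD; apply: qd_mono => //; rewrite /m ?ge_min ?lexx ?orbT //.
Qed.

Lemma Dp_sublin x : sublin (Dp g x).
Proof. by split; [move=> a w; exact: Dp_Z | exact: Dp_D]. Qed.

Lemma qd_x x t : 0 < t -> qd g x x t = g x.
Proof.
move=> t0; rewrite /qd -{1}(scale1r x) -scalerDl gZ; last by rewrite addr_gt0.
by field; rewrite gt_eqF.
Qed.

Lemma Dp_x x : Dp g x x = g x.
Proof.
apply/eqP; rewrite eq_le; apply/andP; split.
  by rewrite -(qd_x x ltr01) Dp_le.
by apply: Dp_ge => t t0; rewrite qd_x.
Qed.

Lemma Dp_Nx x : Dp g x (- x) = - g x.
Proof.
apply/eqP; rewrite eq_le; apply/andP; split; last by have := Dp_lb x (- x); rewrite opprK.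
have h2 : 0 < 2^-1 :> R by rewrite invr_gt0.
apply: le_trans (Dp_le _ _ h2) _; rewrite /qd.
have -> : x + 2^-1 *: - x = 2^-1 *: x.
  by apply/rowP => i; rewrite !mxE; field.
rewrite (gZ _ h2) le_eqVlt; apply/orP; left; apply/eqP; by field.
Qed.

Lemma Dp_scale x w a : 0 < a -> Dp g (a *: x) w = Dp g x w.
Proof.
move=> a0; apply/eqP; rewrite eq_le; apply/andP; split.
  apply: Dp_ge => t t0; have at0 : 0 < a * t by rewrite mulr_gt0.
  apply: le_trans (Dp_le _ _ at0) _.
  rewrite /qd -scalerA -scalerDr gZ //; rewrite le_eqVlt; apply/orP; left.
  rewrite (gZ (x + _) a0); apply/eqP; field; by rewrite !gt_eqF.
apply: Dp_ge => t t0; have at0 : 0 < t / a by rewrite divr_gt0.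
apply: le_trans (Dp_le _ _ at0) _.
rewrite /qd (_ : a *: x + t *: w = a *: (x + (t / a) *: w)); last first.
  by rewrite scalerDr scalerA mulrC divfK ?gt_eqF.
rewrite !gZ //; rewrite le_eqVlt; apply/orP; left.
by apply/eqP; field; rewrite !gt_eqF.
Qed.

End DirDeriv.


Section Body.
Variables (R : realType) (d : nat).
Local Notation V := 'rV[R]_d.
Implicit Types (u v w x y z : V).

Lemma nbhs_normP (y : V) (B : set V) :
  nbhs y B -> exists2 e : R, 0 < e & forall z, `|y - z| < e -> B z.
Proof.
move=> /nbhs_ballP[e e0 H]; exists e => // z yz; apply: H.
by rewrite -ball_normE.
Qed.

Lemma body_ball (C : set V) : regular_symmetric_body C ->
  exists2 r : R, 0 < r & forall z, `|z| < r -> C z.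
Proof.
case=> _ hconv [p /nbhs_normP[e e0 H]] hsym _.
exists e => // z ze.
have h1 : C (p + z) by apply: H; rewrite opprD addNKr normrN.
have h2 : C (- p + z).
  by rewrite -[_ + z]opprK opprD opprK hsym opprK; apply: H; rewrite opprB addrC subrK.
have := hconv _ _ h1 h2 2^-1; rewrite (_ : (1 - 2^-1) *: (p + z) + 2^-1 *: (- p + z) = z).
  by apply; rewrite invr_ge0 ler0n /= invf_le1 ?ler1n.
by apply/rowP => i; rewrite !mxE; field.
Qed.

Lemma body_bounded (C : set V) : regular_symmetric_body C ->
  exists2 M : R, 0 < M & forall c, C c -> `|c| <= M.
Proof.
case=> /compact_bounded [M0 [_ HM]] _ _ _ _.
exists (`|M0| + 1); first by rewrite ltr_wpDl.
by apply: HM; rewrite (le_lt_trans (ler_norm _)) // ltrDl.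
Qed.

Lemma body_closed (C : set V) : regular_symmetric_body C -> closed C.
Proof. by case=> cC _ _ _ _; apply: compact_closed => //; exact: norm_hausdorff. Qed.

Lemma body_convex (C : set V) : regular_symmetric_body C -> Defs.convex_set C.
Proof. by case. Qed.

End Body.

Lemma aux_s (R : realType) (a e : R) : 0 <= a -> 0 < e -> e / (2 * (a + e)) * a < e.
Proof.
move=> a0 e0; have ae : 0 < 2 * (a + e) by apply: mulr_gt0 => //; lra.
rewrite mulrAC ltr_pdivrMr //; nra.
Qed.

Section Smooth.
Variables (R : realType) (d : nat).
Local Notation V := 'rV[R]_d.
Implicit Types (u v w x y z : V).
Variables (C : set V) (r M : R).
Hypotheses (hreg : regular_symmetric_body C) (hr : 0 < r)
  (hball : forall z, `|z| < r -> C z) (hM : 0 < M)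
  (hbd : forall c, C c -> `|c| <= M).
Let hconv := body_convex hreg.
Local Notation g := (gauge C).
Let gZ := g_Z hr hball.
Let gD := g_D hr hball hconv.

Lemma g_one x : x != 0 -> g ((g x)^-1 *: x) = 1.
Proof.
move=> x0; have gx := g_gt0 hr hball hM hbd x0.
by rewrite gZ ?invr_gt0 // mulVf ?gt_eqF.
Qed.

Lemma g1_boundary y : g y = 1 -> boundary C y.
Proof.
move=> gy; split.
- move=> B /nbhs_normP[e e0 HB].
  set s := e / (2 * (`|y| + e)).
  have ye : 0 < `|y| + e by rewrite ltr_wpDl.
  have s0 : 0 < s by rewrite divr_gt0 // mulr_gt0.
  have s1 : s < 1.
    rewrite ltr_pdivrMr ?mulr_gt0 // mul1r; have := normr_ge0 y; lra.
  exists ((1 - s) *: y); split.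
    by apply: (g_lt1 hr hball hconv); rewrite gZ ?gy; lra.
  apply: HB; rewrite -{1}(scale1r y) -scalerBl opprB addrC subrK normrZ.
  by rewrite gtr0_norm // aux_s.
- move=> /nbhs_normP[e e0 HB].
  set s := e / (2 * (`|y| + e)).
  have ye : 0 < `|y| + e by rewrite ltr_wpDl.
  have s0 : 0 < s by rewrite divr_gt0 // mulr_gt0.
  have : C ((1 + s) *: y).
    apply: HB; rewrite scalerDl scale1r opprD addrA subrr sub0r normrN normrZ.
    by rewrite gtr0_norm // aux_s.
  move=> /g_mem; rewrite gZ ?gy; last by rewrite addr_gt0.
  lra.
Qed.

Lemma Dp_antisym x w : x != 0 -> Dp g x (- w) = - Dp g x w.
Proof.
move=> x0; have gx := g_gt0 hr hball hM hbd x0.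
set y := (g x)^-1 *: x.
have by_ := g1_boundary (g_one x0).
have sp := Dp_sublin gZ gD x.
have normal : forall u, (forall z, edot u z <= Dp g x z) ->
    supporting_normal C y u /\ edot u y = 1.
  move=> u hu.
  have ux : edot u x = g x.
    apply/eqP; rewrite eq_le; have := hu x; rewrite Dp_x // => -> /=.
    by have := hu (- x); rewrite Dp_Nx // edotNr; lra.
  have uy : edot u y = 1 by rewrite /y edotZr ux mulVf ?gt_eqF.
  split=> //; split.
    by apply/eqP => u0; move: uy; rewrite u0 edot0l => /eqP; rewrite eq_sym oner_eq0.
  move=> c Cc; rewrite uy; apply: le_trans (hu c) _.
  by apply: le_trans (Dp_le_g gZ gD x c) _; exact: g_mem.
have [u1 [h1 e1]] := hahn_banach w sp.
have [u2 [h2 e2]] := hahn_banach (- w) sp.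
have [n1 y1] := normal u1 h1; have [n2 y2] := normal u2 h2.
have [l l0 ul] : exists2 l : R, 0 < l & u2 = l *: u1.
  by case: hreg => _ _ _ _ [hsm _]; exact: (hsm y by_ u1 u2 n1 n2).
have l1 : l = 1 by move: y2; rewrite ul edotZl y1 mulr1.
by rewrite -e2 -e1 ul l1 scale1r edotNr.
Qed.

End Smooth.


Lemma near0'P (R : realType) (P : R -> Prop) (e : R) : 0 < e ->
  (forall h, `|h| < e -> h != 0 -> P h) -> \forall h \near 0^', P h.
Proof.
move=> e0 H; apply/nbhs_ballP; exists e => // h; rewrite -ball_normE /= sub0r normrN.
by move=> he hn; exact: H.
Qed.

Section Deriv.
Variables (R : realType) (d : nat).
Local Notation V := 'rV[R]_d.
Implicit Types (u v w x y z : V).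
Variables (C : set V) (r M : R).
Hypotheses (hreg : regular_symmetric_body C) (hr : 0 < r)
  (hball : forall z, `|z| < r -> C z) (hM : 0 < M)
  (hbd : forall c, C c -> `|c| <= M).
Let hconv := body_convex hreg.
Local Notation g := (gauge C).
Let gZ := g_Z hr hball.
Let gD := g_D hr hball hconv.

Lemma quot_cvg x w : x != 0 ->
  (fun h : R => (g (h *: w + x) - g x) / h) @ 0^' --> Dp g x w.
Proof.
move=> x0; set L := Dp g x w.
have aN := Dp_antisym hreg hr hball hM hbd w x0.
apply/cvgrPdist_le => e e0.
have [t1 t10 ht1] := Dp_approx g x w e0.
have [t2 t20 ht2] := Dp_approx g x (- w) e0.
have m0 : 0 < Num.min t1 t2 by rewrite lt_min t10 t20.
apply: (near0'P m0) => h; rewrite lt_min => /andP[h1 h2] hn.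
have [hp|hn'] := ltP 0 h.
  have a1 := Dp_le gZ gD x w hp.
  have a2 := qd_mono gZ gD x w hp (ltW (le_lt_trans (ler_norm h) h1)).
  have eq : (g (h *: w + x) - g x) / h = qd g x w h by rewrite /qd [h *: w + x]addrC.
  rewrite eq ler_norml; apply/andP; split; rewrite /L; lra.
have hneg : h < 0 by rewrite lt_neqAle hn'  andbT.
have t0 : 0 < - h by rewrite oppr_gt0.
have a1 := Dp_le gZ gD x (- w) t0.
have ht : - h <= t2 by rewrite -(ltr0_norm hneg) ltW.
have a2 := qd_mono gZ gD x (- w) t0 ht.
have e' : (g (h *: w + x) - g x) / h = - qd g x (- w) (- h).
  rewrite /qd (_ : x + (- h) *: (- w) = h *: w + x); last by apply/rowP => i; rewrite !mxE; ring.
  by field; rewrite ?oppr_eq0.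
rewrite e' ler_norml; apply/andP; split; rewrite /L; rewrite aN in a1 ht2; lra.
Qed.

Lemma deriv_sq x w : x != 0 ->
  derive (fun y : V => g y ^+ 2 / 2) x w = g x * Dp g x w.
Proof.
move=> x0; rewrite /derive.
have -> : (fun h : R => h^-1 *: (((fun y : V => g y ^+ 2 / 2) \o shift x) (h *: w)
            - g x ^+ 2 / 2)) =
          (fun h => (g (h *: w + x) + g x) / 2 * ((g (h *: w + x) - g x) / h)).
  by apply: funext => h /=; rewrite -[h^-1 *: _]/(h^-1 * _); ring.
apply: cvg_lim; first exact: norm_hausdorff.
have -> : g x * Dp g x w = ((g x + g x) / 2) * Dp g x w by congr (_ * _); field.
apply: cvgM; last exact: quot_cvg.
apply: cvgM; last exact: cvg_cst.
apply: cvgD; last exact: cvg_cst.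
apply/cvgrPdist_le => e e0.
have wp : 0 < `|w| + 1 by rewrite ltr_wpDl.
have er : 0 < e * r / (`|w| + 1) by rewrite !mulr_gt0 // invr_gt0.
apply: (near0'P er) => h hh _.
have := g_lip hr hball hconv x (h *: w + x).
rewrite (_ : x - (h *: w + x) = - (h *: w)); last by apply/rowP => i; rewrite !mxE; ring.
rewrite normrN normrZ => H.
apply: le_trans H _; rewrite ler_pdivrMr //.
rewrite ltr_pdivlMr // in hh.
have := normr_ge0 h; have := normr_ge0 w; nra.
Qed.

End Deriv.


Section Haus.
Variables (R : realType) (d : nat).
Local Notation V := 'rV[R]_d.
Implicit Types (u v w x y z : V).

Lemma haus1 (A B : set V) (rA rB e : R) :
  0 < rA -> (forall z, `|z| < rA -> A z) ->
  0 < rB -> (forall z, `|z| < rB -> B z) -> Defs.convex_set B -> 0 <= e ->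
  (forall a, A a -> exists2 b, B b & `|a - b| <= e) ->
  forall x, gauge B x <= (1 + e / rB) * gauge A x.
Proof.
move=> hrA hA hrB hB cB e0 AB x.
have k0 : 0 < 1 + e / rB by rewrite ltr_wpDr // divr_ge0 // ltW.
rewrite mulrC -ler_pdivrMr //; apply: (g_ge hrA hA) => l [l0 [c Ac ->]].
rewrite ler_pdivrMr // (g_Z hrB hB _ l0) ler_pM2l //.
have [b Bb cb] := AB c Ac.
have := g_D hrB hB cB b (c - b); rewrite addrCA subrr addr0 => h.
apply: le_trans h _; apply: lerD; first exact: g_mem.
apply: le_trans (g_le_norm hrB hB _) _.
by apply: ler_wpM2r => //; rewrite invr_ge0 ltW.
Qed.

Lemma haus2 (A B : set V) (rA rB MB e l : R) :
  0 < rA -> (forall z, `|z| < rA -> A z) -> Defs.convex_set A ->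
  0 < rB -> (forall z, `|z| < rB -> B z) -> Defs.convex_set B ->
  0 < MB -> (forall c, B c -> `|c| <= MB) ->
  0 < l -> l < 1 -> e < l * rB ->
  (forall b, B b -> exists2 a, A a & `|b - a| <= e) ->
  forall x, gauge A x <= gauge B x / (1 - l).
Proof.
move=> hrA hA cA hrB hB cB hMB hbB l0 l1 el BA x.
set S := sup [set gauge A b | b in B].
have Sne : [set gauge A b | b in B] !=set0.
  by exists (gauge A 0); exists 0 => //; apply: hB; rewrite normr0.
have Sub : has_sup [set gauge A b | b in B].
  split=> //; exists (MB / rA) => _ [b Bb <-].
  apply: le_trans (g_le_norm hrA hA b) _.
  by apply: ler_wpM2r; [rewrite invr_ge0 ltW | exact: hbB].
have gS : forall b, B b -> gauge A b <= S.
  by move=> b Bb; apply: sup_upper_bound => //; exists b.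
have S1 : S <= 1 + l * S.
  apply: ge_sup => // _ [b Bb <-].
  have [a Aa ba] := BA b Bb.
  have := g_D hrA hA cA a (b - a); rewrite addrCA subrr addr0 => h.
  apply: le_trans h _; apply: lerD; first exact: g_mem.
  have li : 0 < l^-1 by rewrite invr_gt0.
  have -> : b - a = l *: (l^-1 *: (b - a)) by rewrite scalerA mulfV ?gt_eqF // scale1r.
  rewrite (g_Z hrA hA _ l0) ler_pM2l //; apply: gS; apply: hB.
  rewrite normrZ gtr0_norm // mulrC ltr_pdivrMr //.
  by apply: le_lt_trans ba _; rewrite mulrC.
have l10 : 0 < 1 - l by rewrite subr_gt0.
have S1' : S * (1 - l) <= 1 by rewrite mulrBr mulr1 lerBlDr [S * l]mulrC.
rewrite ler_pdivlMr //; apply: le_of_gt => t tx.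
have t0 : 0 < t by apply: le_lt_trans tx; exact: (g_ge0 hrB hB).
have ti : 0 < t^-1 by rewrite invr_gt0.
have Bx : B (t^-1 *: x).
  apply: (g_lt1 hrB hB cB); rewrite (g_Z hrB hB _ ti) mulrC ltr_pdivrMr // mul1r.
  by [].
have := gS _ Bx; rewrite (g_Z hrA hA _ ti) => h.
have h' : gauge A x <= t * S by rewrite -ler_pdivrMl // mulrC.
apply: le_trans (ler_wpM2r (ltW l10) h') _.
by rewrite -mulrA ler_piMr // ltW.
Qed.

End Haus.


Lemma near_normP (R : realType) (d : nat) (y : 'rV[R]_d) (P : set 'rV[R]_d) (e : R) :
  0 < e -> (forall z, `|y - z| < e -> P z) -> \forall z \near y, P z.
Proof.
move=> e0 H; apply/nbhs_ballP; exists e => // z; rewrite -ball_normE; exact: H.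
Qed.

Lemma near0rP (R : realType) (P : R -> Prop) (e : R) : 0 < e ->
  (forall h, 0 < h -> h < e -> P h) -> \forall h \near 0^'+, P h.
Proof.
move=> e0 H; apply/nbhs_ballP; exists e => // h; rewrite -ball_normE /= sub0r normrN.
by move=> he hp; apply: H => //; rewrite -(gtr0_norm hp).
Qed.

Lemma near0r_ex (R : realType) (P : R -> Prop) :
  (\forall h \near 0^'+, P h) -> exists2 t, 0 < t & P t.
Proof.
move=> /nbhs_ballP[e e0 H]; exists (e / 2); first by rewrite divr_gt0.
apply: H; last by rewrite divr_gt0.
rewrite -ball_normE /= sub0r normrN gtr0_norm ?divr_gt0 //.
by rewrite ltr_pdivrMr // ltr_pMr // ltr1n.
Qed.

Section Dini.
Variables (R : realType) (d : nat).
Local Notation V := 'rV[R]_d.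
Implicit Types (u v w x y z : V).
Variables (C : set V) (r M : R).
Hypotheses (hreg : regular_symmetric_body C) (hr : 0 < r)
  (hball : forall z, `|z| < r -> C z) (hM : 0 < M)
  (hbd : forall c, C c -> `|c| <= M).
Let hconv := body_convex hreg.
Local Notation g := (gauge C).
Let gZ := g_Z hr hball.
Let gD := g_D hr hball hconv.

Lemma g_cont : continuous g.
Proof.
move=> x; have FF : ProperFilter (nbhs x) by exact: nbhs_pfilter.
apply/(@cvgrPdist_le _ _ _ (nbhs x) FF) => e e0.
have er : 0 < e * r by rewrite mulr_gt0.
apply: (near_normP er) => z xz.
apply: le_trans (g_lip hr hball hconv x z) _.
by rewrite ler_pdivrMr // ltW.
Qed.

Lemma K_compact : compact [set y | g y = 1].
Proof.
apply: bounded_closed_compact.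
  exists M; split; first exact: num_real.
  move=> M' MM' y /= gy; apply: ltW; apply: le_lt_trans MM'.
  have := g_ge_norm hr hball hM hbd y; rewrite gy ler_pdivrMr // mul1r //.
rewrite (_ : [set y | g y = 1] = g @^-1` [set 1]) //.
apply: preimage_closed; first by move=> y _; exact: g_cont.
apply: accessible_closed_set1; apply: hausdorff_accessible; exact: norm_hausdorff.
Qed.

Lemma qd_lip y y' w t : 0 < t ->
  `|qd g y w t - qd g y' w t| <= 2 * (`|y - y'| / r) / t.
Proof.
move=> t0; rewrite /qd -mulrBl normrM (@gtr0_norm _ t^-1) ?invr_gt0 // ler_pM2r ?invr_gt0 //.
have h1 := g_lip hr hball hconv (y + t *: w) (y' + t *: w).
have h2 := g_lip hr hball hconv y y'.
rewrite (_ : y + t *: w - (y' + t *: w) = y - y') in h1; last first.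
  by apply/rowP => i; rewrite !mxE; ring.
rewrite (_ : g (y + t *: w) - g y - (g (y' + t *: w) - g y') =
   (g (y + t *: w) - g (y' + t *: w)) - (g y - g y')); last by ring.
apply: le_trans (ler_normB _ _) _; lra.
Qed.

Lemma dini w e : 0 < e -> exists2 t, 0 < t &
  forall y, g y = 1 -> qd g y w t <= Dp g y w + e.
Proof.
move=> e0.
suff [t t0 Ht] : exists2 t, 0 < t &
    [set y | g y = 1] `<=` (fun y => qd g y w t <= Dp g y w + e).
  by exists t => // y gy; exact: Ht.
apply: near0r_ex.
apply: ((compact_near_coveringP _).1 K_compact R (0^'+)
   (fun t y => qd g y w t <= Dp g y w + e)).
- move=> y /= gy.
  have y0 : y != 0 by apply/eqP => y0; move: gy; rewrite y0 (g_0 hr hball); lra.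
  have e3 : 0 < e / 3 by rewrite divr_gt0.
  have [t0 t00 ht0] := Dp_approx g y w e3.
  have [s s0 hs] := Dp_approx g y (- w) e3.
  have aN := Dp_antisym hreg hr hball hM hbd w y0.
  set rho := Num.min `|y| (e / 12 * r * Num.min t0 s).
  have ny : 0 < `|y| by rewrite normr_gt0.
  have rho0 : 0 < rho.
    by rewrite lt_min ny /= !mulr_gt0 // ?lt_min ?t00 ?s0 // divr_gt0.
  near=> y' t.
  have hy : `|y - y'| < rho by near: y'; apply: (near_normP rho0).
  have ht : 0 < t < t0 by near: t; apply: (near0rP t00) => h h0 ht; rewrite h0.
  have y'0 : y' != 0.
    apply/eqP => y'0; move: hy; rewrite y'0 subr0 lt_min ltxx //.
  have aN' := Dp_antisym hreg hr hball hM hbd w y'0.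
  have l1 := qd_lip y y' w t00; have l2 := qd_lip y y' (- w) s0.
  have hyr : 2 * (`|y - y'| / r) / t0 <= e / 6 /\ 2 * (`|y - y'| / r) / s <= e / 6.
    have hy' : `|y - y'| < e / 12 * r * Num.min t0 s by move: hy; rewrite lt_min => /andP[].
    have m1 : Num.min t0 s <= t0 by rewrite ge_min lexx.
    have m2 : Num.min t0 s <= s by rewrite ge_min lexx orbT.
    have n0 := normr_ge0 (y - y').
    have m0 : 0 < Num.min t0 s by rewrite lt_min t00 s0.
    split; rewrite ler_pdivrMr // mulrA ler_pdivrMr //.
      have : `|y - y'| <= e / 12 * r * t0.
        apply: ltW; apply: lt_le_trans hy' _; apply: ler_wpM2l => //.
        by rewrite mulr_ge0 // ?divr_ge0 // ltW.
      nra.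
    have : `|y - y'| <= e / 12 * r * s.
      apply: ltW; apply: lt_le_trans hy' _; apply: ler_wpM2l => //.
      by rewrite mulr_ge0 // ?divr_ge0 // ltW.
    nra.
  case: hyr => hyr1 hyr2.
  case/andP: ht => hta htb.
  have mono := qd_mono gZ gD y' w hta (ltW htb).
  have lb := Dp_le gZ gD y' (- w) s0.
  rewrite aN' in lb; rewrite aN in hs.
  move: l1 l2; rewrite !ler_norml => /andP[l1 l1'] /andP[l2 l2'].
  lra.
Unshelve. all: end_near.
Qed.

End Dini.


Section Approx.
Variables (R : realType) (d : nat).
Local Notation V := 'rV[R]_d.
Implicit Types (u v w x y z : V).

Lemma approx_n (Cn C : set V) (r M l : R) :
  regular_symmetric_body Cn -> regular_symmetric_body C ->
  0 < r -> (forall z, `|z| < r -> C z) -> 0 < M -> (forall c, C c -> `|c| <= M) ->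
  0 < l -> l <= 2^-1 -> hausdorff_dist Cn C < l * r ->
  forall z, `|gauge Cn z - gauge C z| <= 2 * l * gauge C z.
Proof.
move=> hCn hC hr hball hM hbd l0 l2 hH.
have [rn hrn hballn] := body_ball hCn.
have [Mn hMn hbdn] := body_bounded hCn.
have cC := body_convex hC; have cCn := body_convex hCn.
have Hne : [set e : R | 0 <= e /\ Cn `<=` enbhd C e /\ C `<=` enbhd Cn e] !=set0.
  exists (d%:R * (Mn + M)); split; first by rewrite mulr_ge0 // addr_ge0 // ltW.
  split=> a Ha; exists 0; rewrite ?subr0.
  - by apply: hball; rewrite normr0.
  - apply: le_trans (enorm_le _) _; apply: ler_wpM2l => //.
    by have := hbdn _ Ha; lra.
  - by apply: hballn; rewrite normr0.
  - apply: le_trans (enorm_le _) _; apply: ler_wpM2l => //.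
    by have := hbd _ Ha; lra.
have [e [e0 [h1 h2]] el] := inf_lt Hne hH.
have AB : forall a, Cn a -> exists2 b, C b & `|a - b| <= e.
  by move=> a /h1 [b Cb hb]; exists b => //; apply: le_trans (norm_le_enorm _) hb.
have BA : forall b, C b -> exists2 a, Cn a & `|b - a| <= e.
  by move=> b /h2 [a Ca ha]; exists a => //; apply: le_trans (norm_le_enorm _) ha.
move=> z.
have k1 := haus1 hrn hballn hr hball cC e0 AB z.
have l1 : l < 1 by apply: le_lt_trans l2 _; rewrite invf_lt1 ?ltr1n.
have k2 := haus2 hrn hballn cCn hr hball cC hM hbd l0 l1 el BA z.
have G0 := g_ge0 hr hball z; have Gn0 := g_ge0 hrn hballn z.
have l10 : 0 < 1 - l by rewrite subr_gt0.
rewrite ler_pdivlMr // in k2.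
have er : e / r <= l by rewrite ler_pdivrMr // ltW.
have k1' : gauge C z <= gauge Cn z + l * gauge Cn z.
  apply: le_trans k1 _; rewrite mulrDl mul1r lerD2l ler_wpM2r //.
have h2' : (2^-1 : R) = 1 / 2 by rewrite div1r.
rewrite h2' in l2.
rewrite ler_norml; apply/andP; split; nra.
Qed.

End Approx.

Section Entry.
Variables (R : realType) (d : nat).
Local Notation V := 'rV[R]_d.
Implicit Types (u v w x y z : V).

Lemma qd_diff (g gn : V -> R) (k : R) y w t : 0 < t ->
  (forall z, `|gn z - g z| <= k * g z) ->
  qd gn y w t <= qd g y w t + k * (g (y + t *: w) + g y) / t.
Proof.
move=> t0 hk; rewrite /qd -mulrDl ler_pM2r ?invr_gt0 //.
have h1 := hk (y + t *: w); have h2 := hk y.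
rewrite !ler_norml in h1 h2.
case/andP: h1 => h1 h1'; case/andP: h2 => h2 h2'.
lra.
Qed.

Lemma entry_est (Cn C : set V) (r M rn Mn : R) (w : V) (e1 t1 t2 k : R) :
  regular_symmetric_body Cn -> regular_symmetric_body C ->
  0 < r -> (forall z, `|z| < r -> C z) -> 0 < M -> (forall c, C c -> `|c| <= M) ->
  0 < rn -> (forall z, `|z| < rn -> Cn z) -> 0 < Mn -> (forall c, Cn c -> `|c| <= Mn) ->
  `|w| <= 1 -> 0 < t1 -> 0 < t2 -> 0 <= k -> k <= 1 ->
  (forall y, gauge C y = 1 -> qd (gauge C) y w t1 <= Dp (gauge C) y w + e1) ->
  (forall y, gauge C y = 1 -> qd (gauge C) y (- w) t2 <= Dp (gauge C) y (- w) + e1) ->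
  (forall z, `|gauge Cn z - gauge C z| <= k * gauge C z) ->
  forall x, x != 0 -> `|x| <= 1 ->
  `|gauge Cn x * Dp (gauge Cn) x w - gauge C x * Dp (gauge C) x w| <=
    k / r * (2 / r) + r^-1 * (e1 + k * ((2 + t1 / r) / t1 + (2 + t2 / r) / t2)).
Proof.
move=> hCn hC hr hball hM hbd hrn hballn hMn hbdn hw t10 t20 k0 k1 D1 D2 hk x x0 hx.
have cC := body_convex hC; have cCn := body_convex hCn.
have gZ := g_Z hr hball; have gD := g_D hr hball cC.
have gnZ := g_Z hrn hballn; have gnD := g_D hrn hballn cCn.
have gx0 := g_gt0 hr hball hM hbd x0.
have a0 : 0 < ((gauge C) x)^-1 by rewrite invr_gt0.
set y := ((gauge C) x)^-1 *: x.
have gy : (gauge C) y = 1 := g_one hr hball hM hbd x0.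
have y0 : y != 0 by apply/eqP => y0; move: gy; rewrite y0 (g_0 hr hball); lra.
rewrite -(Dp_scale gZ gD x w a0) -(Dp_scale gnZ gnD x w a0) -/y.
set D := Dp (gauge C) y w; set Dn := Dp (gauge Cn) y w.
have gw : forall v, `|v| <= 1 -> (gauge C) v <= r^-1.
  move=> v hv; apply: le_trans (g_le_norm hr hball v) _.
  by rewrite mulrC ler_piMr // invr_ge0 ltW.
have hwN : `|- w| <= 1 by rewrite normrN.
have gyt : forall t v, 0 < t -> `|v| <= 1 -> (gauge C) (y + t *: v) <= 1 + t / r.
  move=> t v t0 hv; apply: le_trans (gD _ _) _; rewrite gy lerD2l gZ //.
  by rewrite ler_pM2l // gw.
have up1 : Dn <= D + e1 + k * ((2 + t1 / r) / t1).
  apply: le_trans (Dp_le gnZ gnD y w t10) _.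
  apply: le_trans (qd_diff _ _ t10 hk) _.
  have := D1 y gy; rewrite -/D => h.
  have : k * ((gauge C) (y + t1 *: w) + (gauge C) y) / t1 <= k * ((2 + t1 / r) / t1).
    rewrite mulrA ler_pM2r ?invr_gt0 // ler_wpM2l // gy.
    by have := gyt t1 w t10 hw; lra.
  lra.
have up2 : - Dn <= - D + e1 + k * ((2 + t2 / r) / t2).
  rewrite -(Dp_antisym hC hr hball hM hbd w y0).
  rewrite -(Dp_antisym hCn hrn hballn hMn hbdn w y0).
  apply: le_trans (Dp_le gnZ gnD y (- w) t20) _.
  apply: le_trans (qd_diff _ _ t20 hk) _.
  have := D2 y gy; move=> h.
  have : k * ((gauge C) (y + t2 *: - w) + (gauge C) y) / t2 <= k * ((2 + t2 / r) / t2).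
    rewrite mulrA ler_pM2r ?invr_gt0 // ler_wpM2l // gy.
    by have := gyt t2 (- w) t20 hwN; lra.
  lra.
have q1 : 0 <= (2 + t1 / r) / t1.
  apply: divr_ge0; last exact: ltW.
  by apply: addr_ge0 => //; apply: divr_ge0; exact: ltW.
have q2 : 0 <= (2 + t2 / r) / t2.
  apply: divr_ge0; last exact: ltW.
  by apply: addr_ge0 => //; apply: divr_ge0; exact: ltW.
have hDD : `|Dn - D| <= e1 + k * ((2 + t1 / r) / t1 + (2 + t2 / r) / t2).
  rewrite ler_norml; apply/andP; split; nra.
have hDn : `|Dn| <= 2 / r.
  have b1 : Dn <= (gauge Cn) w by exact: Dp_le_g gnZ gnD y w.
  have b2 : - (gauge Cn) (- w) <= Dn by exact: Dp_lb gnZ gnD y w.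
  have c1 := hk w; have c2 := hk (- w).
  have e1' := gw w hw; have e2' := gw (- w) hwN.
  have f1 := g_ge0 hr hball w; have f2 := g_ge0 hr hball (- w).
  rewrite !ler_norml in c1 c2.
  case/andP: c1 => c1 c1'; case/andP: c2 => c2 c2'.
  rewrite ler_norml; apply/andP; split; rewrite mulrC; nra.
have hgx : (gauge C) x <= r^-1 by exact: gw.
have hgk : `|(gauge Cn) x - (gauge C) x| <= k / r.
  by apply: le_trans (hk x) _; apply: ler_wpM2l.
rewrite (_ : (gauge Cn) x * Dn - (gauge C) x * D = ((gauge Cn) x - (gauge C) x) * Dn + (gauge C) x * (Dn - D)); last by ring.
apply: le_trans (ler_normD _ _) _; rewrite !normrM.
apply: lerD; first by apply: ler_pM => //; exact: normr_ge0.
rewrite ger0_norm ?(ltW gx0) //; apply: ler_pM => //; exact: ltW.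
Qed.

End Entry.

Theorem proposition4p6 (R : realType) (d : nat)
    (Cs : nat -> set 'rV[R]_d) (C : set 'rV[R]_d) :
  (forall n, regular_symmetric_body (Cs n)) ->
  regular_symmetric_body C ->
  hausdorff_dist (Cs n) C @[n --> \oo] --> (0 : R) ->
  forall eps : R, 0 < eps ->
    \forall n \near \oo, forall x : 'rV[R]_d, unit_ball x ->
      enorm (phi (Cs n) x - phi C x) <= eps.
Proof.
move=> hCs hC hH eps eps0.
have [r hr hball] := body_ball hC; have [M hM hbd] := body_bounded hC.
have d1 : 0 < d%:R + 1 :> R by rewrite ltr_wpDl.
set c := eps / (d%:R + 1).
have c0 : 0 < c by rewrite divr_gt0.
suff H : forall i : 'I_d, \forall n \near \oo, forall x, unit_ball x ->
    `|(phi (Cs n) x - phi C x) 0 i| <= c.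
  have HH := filter_forall eventually_filter H; apply: (filterS _ HH) => n Hn x hx.
  apply: le_trans (enorm_le _) _.
  have : `|phi (Cs n) x - phi C x| <= c.
    by apply: norm_le_entries => [|i]; [exact: ltW | exact: Hn].
  move=> hv; apply: le_trans (ler_wpM2l (ler0n _ _) hv) _.
  rewrite /c mulrA ler_pdivrMr //; nra.
move=> i; set w := delta_mx 0 i : 'rV[R]_d.
have hw : `|w| <= 1.
  apply: norm_le_entries => // j; rewrite mxE.
  by case: (_ && _); rewrite ?normr1 ?normr0.
have e10 : 0 < c * r / 2 by rewrite divr_gt0 // mulr_gt0.
have [t1 t10 D1] := dini hC hr hball hM hbd w e10.
have [t2 t20 D2] := dini hC hr hball hM hbd (- w) e10.
set Q := (2 + t1 / r) / t1 + (2 + t2 / r) / t2.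
have Q0 : 0 <= Q.
  apply: addr_ge0; (apply: divr_ge0; last exact: ltW);
    (apply: addr_ge0 => //; apply: divr_ge0; exact: ltW).
set B := 2 / (r * r) + Q / r.
have B0 : 0 <= B.
  apply: addr_ge0; apply: divr_ge0 => //; [exact: mulr_ge0 (ltW hr) (ltW hr) | exact: ltW].
set l := Num.min (2^-1) (c / (4 * (B + 1))).
have l0 : 0 < l.
  by rewrite lt_min invr_gt0 ltr0n /= divr_gt0 // mulr_gt0 // ltr_wpDl.
have l2 : l <= 2^-1 by rewrite ge_min lexx.
have lc : l <= c / (4 * (B + 1)) by rewrite ge_min lexx orbT.
have lr : 0 < l * r by rewrite mulr_gt0.
have HH := @cvgr_dist_lt _ _ _ _ eventually_filter _ _ hH _ lr; apply: (filterS _ HH) => n hn.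
have hd : hausdorff_dist (Cs n) C < l * r.
  by apply: le_lt_trans hn; rewrite sub0r normrN ler_norm.
have hk := approx_n (hCs n) hC hr hball hM hbd l0 l2 hd.
have [rn hrn hballn] := body_ball (hCs n); have [Mn hMn hbdn] := body_bounded (hCs n).
move=> x hx.
have [->|x0] := eqVneq x 0.
  by rewrite /phi eqxx subrr mxE normr0 ltW.
rewrite /phi (negbTE x0) !mxE.
rewrite (deriv_sq hC hr hball hM hbd w x0).
rewrite (deriv_sq (hCs n) hrn hballn hMn hbdn w x0).
have hx1 : `|x| <= 1 by apply: le_trans (norm_le_enorm _) hx.
have k0 : 0 <= 2 * l by rewrite mulr_ge0 // ltW.
have k1 : 2 * l <= 1.
  have h2 : (2 : R) * 2^-1 = 1 by rewrite mulfV // pnatr_eq0.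
  by apply: (le_trans (ler_wpM2l (ler0n _ 2) l2)); rewrite h2.
have := entry_est (hCs n) hC hr hball hM hbd hrn hballn hMn hbdn hw t10 t20 k0 k1
  D1 D2 hk x0 hx1.
move=> h; apply: le_trans h _.
have e : 2 * l / r * (2 / r) + r^-1 * (c * r / 2 + 2 * l * Q) = c / 2 + 2 * l * B.
  by rewrite /B; field; rewrite gt_eqF.
rewrite e.
have B1 : 0 < 4 * (B + 1) by rewrite mulr_gt0 // ltr_wpDl.
rewrite ler_pdivlMr // in lc.
nra.
Qed.
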